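(* Let $\rho>1$. There exist a constant $D_0>0$ and an integer $N$, depending only on $T$ and $\rho$, such that for every $k$ and every pair of admissible $(k+1)$-words $w_1,w_2$ with $d_1\ge N$ and $d_2\ge N$, one has $|p_{11}(t)p_{22}(t)-p_{12}(t)p_{21}(t)|\ge D_0|t|^{d_1+d_2}$ for all complex $t$ with $|t|\ge\rho$.
   Context: Let $\mathcal{A}$ be a finite alphabet of $r$ symbols and $T=(T_{x,y})$ an irreducible $r\times r$ matrix with entries in $\{0,1\}$ (the directed graph on $\mathcal{A}$ with an edge $x\to y$ iff $T_{y,x}=1$ is strongly connected). An admissible $k$-word is a string $a_1\cdots a_k$ with $T_{a_{i+1},a_i}=1$ for all $i$. $V_k$ is the complex vector space with basis $\{[w]\}$ indexed by admissible $k$-words; $\psi_k:V_1\to V_k$ is linear with $\psi_k([a])$ the sum of $[w]$ over admissible $k$-words beginning with $a$; $T_k:V_k\to V_k$ is linear with $T_k([a_1\cdots a_k])=\sum[a_2\cdots a_kx]$ over symbols $x$ with $a_2\cdots a_kx$ admissible. For an admissible $k$-word $u=u_1\cdots u_k$, $h(u)$ is the least non-negative integer $h$ such that $u$ is the only admissible $k$-word beginning with $u_1\cdots u_{h+1}$. For admissible $(k+1)$-words $w_1=a_0\cdots a_k$, $w_2=b_0\cdots b_k$: $d_1=h(a_1\cdots a_k)$; $W$ is the span of $\psi_k(V_1)$ and $T_k^i[a_1\cdots a_k]$, $0\le i\le d_1-1$; $d_2$ is the least non-negative integer with $T_k^{d_2}[b_1\cdots b_k]\in W$. Correlation coefficients: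 for $0\le i\le d_1$, $c^{11}_{d_1-i}=1$ if $a_0\cdots a_{k-i}=a_i\cdots a_k$, $c^{21}_{d_1-i}=1$ if $b_0\cdots b_{k-i}=a_i\cdots a_k$; for $0\le j\le d_2$, $c^{12}_{d_2-j}=1$ if $a_0\cdots a_{k-j}=b_j\cdots b_k$, $c^{22}_{d_2-j}=1$ if $b_0\cdots b_{k-j}=b_j\cdots b_k$; all are $0$ otherwise. Correlation polynomials: $p_{11}(t)=\sum_{i=0}^{d_1}c^{11}_{d_1-i}t^{d_1-i}$, $p_{21}(t)=\sum_{i=1}^{d_1}c^{21}_{d_1-i}t^{d_1-i}$, $p_{12}(t)=\sum_{j=1}^{d_2}c^{12}_{d_2-j}t^{d_2-j}$, $p_{22}(t)=\sum_{j=0}^{d_2}c^{22}_{d_2-j}t^{d_2-j}$. *)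

(* Defs.v *)
From HB Require Import structures.
From mathcomp Require Import all_boot all_order all_algebra.
From mathcomp Require Import complex.
From mathcomp Require Import reals.
Set Implicit Arguments. Unset Strict Implicit. Unset Printing Implicit Defensive.
Import Order.TTheory GRing.Theory Num.Theory.
Local Open Scope ring_scope.

Section Defs.
Variable r : nat.
(* transition matrix T, with T x y in {0,1} encoded as a boolean *)
Variable T : 'I_r -> 'I_r -> bool.

Definition edge : rel 'I_r := fun x y => T y x.

Definition irreducible : Prop := forall x y : 'I_r, connect edge x y.

Definition admissible (w : seq 'I_r) : bool := sorted edge w.

Definition AW (k : nat) := {t : k.-tuple 'I_r | admissible t}.

Variable R : realType.
Definition Cx := R[i].

Definition V (k : nat) := {ffun AW k -> Cx^o}.

Definition bvec k (w : AW k) : V k := [ffun x => (x == w)%:R].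

Definition psi k (a : 'I_r) : V k :=
  \sum_(w : AW k | head a (val (val w)) == a) bvec w.
(* note: for k >= 1, head a w == a is exactly "w begins with a" *)

(* basis vector [s] for a word s given as a sequence (zero if s is not an admissible k-word) *)
Definition wvec k (s : seq 'I_r) : V k := [ffun x => (val (val x) == s)%:R].

Definition Tk_basis k (w : AW k) : V k :=
  \sum_(v : AW k | [exists x : 'I_r, val (val v) == rcons (behead (val (val w))) x]) bvec v.

Definition Tmap k (f : V k) : V k := \sum_(w : AW k) f w *: Tk_basis w.

Definition unique_prefix (u : seq 'I_r) (h : nat) : bool :=
  [forall v : AW (size u), (take h.+1 (val (val v)) == take h.+1 u) ==> (val (val v) == u)].

(* h(u): the least such h; for an admissible u of length k >= 1 the value
   h = k - 1 always qualifies, so the search over 0 .. k-1 returns the least one *)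
Definition hh (u : seq 'I_r) : nat := find (unique_prefix u) (iota 0 (size u)).

Definition W k (u : seq 'I_r) (d1 : nat) : {vspace V k} :=
  <<[seq psi k a | a <- enum 'I_r] ++ [seq iter i (@Tmap k) (wvec k u) | i <- iota 0 d1]>>%VS.

Definition corr (k : nat) (x y : seq 'I_r) (i : nat) : bool :=
  take (k.+1 - i) x == drop i y.

Definition p11 k (w1 : seq 'I_r) d1 (t : Cx) : Cx :=
  \sum_(0 <= i < d1.+1) (corr k w1 w1 i)%:R * t ^+ (d1 - i).
Definition p21 k (w1 w2 : seq 'I_r) d1 (t : Cx) : Cx :=
  \sum_(1 <= i < d1.+1) (corr k w2 w1 i)%:R * t ^+ (d1 - i).
Definition p12 k (w1 w2 : seq 'I_r) d2 (t : Cx) : Cx :=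
  \sum_(1 <= j < d2.+1) (corr k w1 w2 j)%:R * t ^+ (d2 - j).
Definition p22 k (w2 : seq 'I_r) d2 (t : Cx) : Cx :=
  \sum_(0 <= j < d2.+1) (corr k w2 w2 j)%:R * t ^+ (d2 - j).
End Defs.

(* Main.v *)
Require Import Defs.
From HB Require Import structures.
From mathcomp Require Import all_boot all_order all_algebra.
From mathcomp Require Import complex.
From mathcomp Require Import reals.
From mathcomp Require Import ring lra zify.
Import Order.TTheory GRing.Theory Num.Theory.

Definition E (f g : nat -> nat) (n j : nat) : bool :=
  all (fun i => f i == g (i + j)) (iota 0 (n - j)).

Lemma EP f g n j : reflect (forall i, i + j < n -> f i = g (i + j)) (E f g n j).
Proof.
apply: (iffP allP) => h.
- move=> i hi; apply/eqP; apply: h; rewrite mem_iota; lia.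
- move=> i; rewrite mem_iota => hi; apply/eqP; apply: h; lia.
Qed.

Lemma E0 f n : E f f n 0.
Proof. by apply/EP => i _; rewrite addn0. Qed.

Lemma E_trans f g h n a b : E f g n a -> E g h n b -> E f h n (a + b).
Proof.
move=> /EP h1 /EP h2; apply/EP => i hi.
rewrite h1; last lia. rewrite h2; last lia. by rewrite addnA.
Qed.

Lemma E_sub f n a b : E f f n a -> E f f n b -> a < b -> a + b <= n -> E f f n (b - a).
Proof.
move=> /EP h1 /EP h2 hab habn; apply/EP => m hm.
case: (ltnP m (n - b)) => hmb.
- rewrite h2; last lia.
  rewrite (h1 (m + (b - a))); last lia.
  congr f; lia.
- rewrite -[m](subnK (_ : a <= m)); last lia.
  rewrite -h1; last lia.
  rewrite (h2 (m - a)); last lia.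
  congr f; lia.
Qed.

Lemma E_cross f g n a b : E f g n a -> E f g n b -> a <= b ->
  forall i, i + b < n -> f i = f (i + (b - a)).
Proof.
move=> /EP h1 /EP h2 hab i hi.
rewrite h2 // h1; last lia.
congr g; lia.
Qed.

Lemma E_ext f n P b c : E f f n P -> (forall i, i + b < n -> f i = f (i + c)) ->
  b <= c + P -> b + P <= n -> E f f n c.
Proof.
move=> /EP hP hp h1 h2; apply/EP => i hi.
case: (ltnP (i + b) n) => hib; first exact: hp.
have h1' := hP (i - P) ltac:(lia).
have h2' := hp (i - P) ltac:(lia).
have h3' := hP (i - P + c) ltac:(lia).
have e1 : i - P + P = i by lia.
have e2 : i - P + c + P = i + c by lia.
by rewrite -e1 -h1' h2' h3' e2 e1.
Qed.

Arguments E_trans {f g h n a b}.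
Arguments E_sub {f n a b}.
Arguments E_cross {f g n a b}.
Arguments E_ext {f n P b c}.

Lemma E_mul f n p m : E f f n p -> E f f n (m * p).
Proof.
move=> hp; elim: m => [|m IH]; first by rewrite mul0n; apply: E0.
by rewrite mulSn addnC; exact: E_trans IH hp.
Qed.

Lemma self_pat f n M : 0 < M -> 2 * M <= n ->
  exists p, 0 < p <= M /\ forall i, i < M -> E f f n i = (p %| i).
Proof.
move=> hM hn.
case: (boolP [exists i : 'I_M, (0 < i) && E f f n i]) => hex.
- have hex' : exists i, [&& 0 < i, i < M & E f f n i].
    case/existsP: hex => i /andP [h1 h2]; exists i; rewrite h1 h2 ltn_ord.
    by [].
  case: (ex_minnP hex') => p /and3P [p0 pM Ep] pmin.
  exists p; split; first by rewrite p0 ltnW.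
  have key : forall m i, i <= m -> i < M -> E f f n i -> p %| i.
    elim=> [|m IH] i him hiM Ei.
      by have -> : i = 0 by lia.
    case: (posnP i) => [->|i0]; first exact: dvdn0.
    have pi : p <= i by apply: pmin; rewrite i0 hiM Ei.
    case: (ltngtP p i) => hpi.
    + have E2 : E f f n (i - p) by apply: E_sub => //; lia.
      have := IH (i - p) ltac:(lia) ltac:(lia) E2.
      by rewrite dvdn_subl // ltnW.
    + lia.
    + by rewrite hpi.
  move=> i hi; apply/idP/idP.
  + exact: key.
  + by move/dvdnP => [m ->]; apply: E_mul.
- exists M; split; first by rewrite hM leqnn.
  move=> i hi; case: (posnP i) => [->|i0]; first by rewrite E0 dvdn0.
  have -> : (M %| i) = false.
    apply/negP => /dvdn_leq h; have := h i0; lia.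
  apply/negP => Ei; move/negP: hex; apply; apply/existsP.
  by exists (Ordinal hi); rewrite /= i0 Ei.
Qed.

Lemma cross_pat f g n M p P s :
  (forall i, i < M -> E f f n i = (p %| i)) -> E f f n P -> P < 2 * M -> 3 * M <= n ->
  s <= P -> 0 < s -> s < M -> E f g n s ->
  (forall j, 0 < j -> j < s -> ~~ E f g n j) ->
  forall j, j < M -> ((0 < j) && E f g n j) = (s <= j) && (p %| j - s).
Proof.
move=> hself hP hP2 hn hsP hs0 hsM hEs hmin j hj.
apply/idP/idP.
- move=> /andP [j0 Ej].
  have sj : s <= j.
    case: (ltnP j s) => // h; by move: (hmin j j0 h); rewrite Ej.
  rewrite sj /= -hself; last lia.
  apply: (E_ext hP (E_cross hEs Ej sj)); lia.
- move=> /andP [sj hd].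
  have Ejs : E f f n (j - s) by rewrite hself //; lia.
  have := E_trans Ejs hEs; rewrite subnK // => ->.
  by rewrite andbT; lia.
Qed.

Local Open Scope ring_scope.
Local Open Scope complex_scope.


Section An.
Context {R : realType}.
Local Notation C := R[i].
Definition nr (x : C) : R := complex.Re `|x|.

Lemma nrE x : `|x| = (nr x)%:C.
Proof. by rewrite /nr RRe_real // normr_real. Qed.

Lemma nr_ge0 x : 0 <= nr x.
Proof. by rewrite -ler0c -nrE. Qed.

Lemma nrD x y : nr (x + y) <= nr x + nr y.
Proof. by rewrite -lecR rmorphD /= -!nrE ler_normD. Qed.

Lemma nrM x y : nr (x * y) = nr x * nr y.
Proof. by apply: complexI; rewrite rmorphM /= -!nrE normrM. Qed.

Lemma nrX x n : nr (x ^+ n) = nr x ^+ n.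
Proof. by apply: complexI; rewrite rmorphXn /= -!nrE normrX. Qed.

Lemma nrN x : nr (- x) = nr x.
Proof. by rewrite /nr normrN. Qed.

Lemma nrB x y : nr (x - y) <= nr x + nr y.
Proof. by rewrite -(nrN y) nrD. Qed.

Lemma nrBl x y : nr x - nr y <= nr (x - y).
Proof. have := nrD (x - y) y; rewrite subrK; lra. Qed.

Lemma nr1 : nr 1 = 1.
Proof. by apply: complexI; rewrite -nrE normr1. Qed.

Lemma nr0 : nr 0 = 0.
Proof. by apply: complexI; rewrite -nrE normr0. Qed.

Lemma nrR (a : R) : nr (a%:C) = `|a|.
Proof. by rewrite /nr normc_def /= expr0n /= addr0 sqrtr_sqr. Qed.

Lemma nr_sum (L : nat) (F : nat -> C) :
  nr (\sum_(0 <= i < L) F i) <= \sum_(0 <= i < L) nr (F i).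
Proof.
elim: L => [|L IH]; first by rewrite !big_geq // nr0.
rewrite !big_nat_recr //=; apply: le_trans (nrD _ _) _; lra.
Qed.

Lemma nr_bool (b : bool) : nr (b%:R) <= 1.
Proof. by case: b; rewrite ?nr1 ?nr0. Qed.

Lemma nr_bool2 (b c : bool) : nr (b%:R - c%:R) <= 1.
Proof. by case: b; case: c; rewrite ?subrr ?nr0 ?subr0 ?nr1 ?sub0r ?nrN ?nr1. Qed.
End An.


Section An2.
Context {R : realType}.
Local Notation C := R[i].

Lemma geo (r : R) M L :
  (1 - r) * \sum_(0 <= i < L) ((M <= i)%N%:R * r ^+ i) = r ^+ M - r ^+ (maxn M L).
Proof.
elim: L => [|L IH].
  by rewrite big_geq // mulr0 maxn0 subrr.
rewrite big_nat_recr //= mulrDr IH.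
case: (leqP M L) => h.
  rewrite (maxn_idPr (leqW h)) exprS mul1r; ring.
rewrite (maxn_idPl h) mul0r; ring.
Qed.

Lemma geo_le (r : R) M L : 0 <= r < 1 ->
  \sum_(0 <= i < L) ((M <= i)%N%:R * r ^+ i) <= r ^+ M / (1 - r).
Proof.
move=> /andP [r0 r1].
have h1 : 0 < 1 - r by lra.
rewrite ler_pdivlMr // mulrC geo.
have : 0 <= r ^+ maxn M L by apply: exprn_ge0.
lra.
Qed.

Lemma tail (r : R) (z : C) M L (c : nat -> C) : 0 <= r < 1 -> nr z <= r ->
  (forall i, (i < M)%N -> c i = 0) -> (forall i, nr (c i) <= 1) ->
  nr (\sum_(0 <= i < L) c i * z ^+ i) <= r ^+ M / (1 - r).
Proof.
move=> hr hz h0 h1.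
apply: le_trans (nr_sum _ _) _.
apply: (le_trans _ (geo_le r M L hr)).
rewrite big_nat [X in _ <= X]big_nat; apply: ler_sum => i _.
rewrite nrM nrX.
case: (ltnP i M) => hi.
  by rewrite h0 // nr0 mul0r mul0r.
rewrite mul1r -[X in _ <= X]mul1r; apply: ler_pM => //.
- exact: nr_ge0.
- exact: exprn_ge0 (nr_ge0 _).
- by apply: lerXn2r => //; rewrite ?nnegrE ?nr_ge0 //; case/andP: hr.
Qed.
End An2.


Section An3.
Context {R : realType}.
Local Notation C := R[i].

Definition Sz (e : nat -> bool) (d : nat) (z : C) : C :=
  \sum_(0 <= i < d.+1) (e i)%:R * z ^+ i.

Lemma S_ext e d z L : (d < L)%N ->
  Sz e d z = \sum_(0 <= i < L) ((i <= d)%N && e i)%:R * z ^+ i.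
Proof.
move=> hL; rewrite /Sz [in RHS](big_cat_nat (n:=d.+1) (leq0n _) hL) /=.
rewrite [X in _ = _ + X]big_nat [X in _ = _ + X]big1 ?addr0; last first.
  move=> i /andP [hi _]; have -> : (i <= d)%N = false by lia.
  by rewrite mul0r.
by rewrite !big_nat; apply: eq_bigr => i /andP [_ hi]; rewrite -ltnS hi.
Qed.

Lemma sum_shift (F : nat -> C) a n :
  \sum_(a <= i < n + a) F i = \sum_(0 <= i < n) F (i + a).
Proof. by rewrite -{1}[a]add0n big_addn addnK. Qed.

Lemma S_shift e d z p :
  z ^+ p * Sz e d z = \sum_(0 <= i < d.+1 + p)
     (((p <= i)%N && ((i - p)%N <= d)%N) && e (i - p)%N)%:R * z ^+ i.
Proof.
rewrite [in RHS](big_cat_nat (n:=p) (leq0n _) (leq_addl _ _)) /=.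
rewrite [X in _ = X + _]big_nat [X in _ = X + _]big1 ?add0r; last first.
  move=> i /andP [_ hi]; have -> : (p <= i)%N = false by lia.
  by rewrite mul0r.
rewrite sum_shift /Sz mulr_sumr !big_nat.
apply: eq_bigr => i /andP [_ hi].
rewrite leq_addl addnK /= -ltnS hi /= exprD; ring.
Qed.

Lemma S_mul e d z p :
  (1 - z ^+ p) * Sz e d z = \sum_(0 <= i < d.+1 + p)
     ((((i <= d)%N && e i)%:R - (((p <= i)%N && ((i - p)%N <= d)%N) && e (i - p)%N)%:R) * z ^+ i).
Proof.
rewrite mulrBl mul1r S_shift (S_ext _ _ _ (d.+1 + p)); last by rewrite leq_addr.
by rewrite -sumrB !big_nat; apply: eq_bigr => i _; rewrite mulrBl.
Qed.
End An3.


Section An4.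
Context {R : realType}.
Local Notation C := R[i].

Lemma sum_delta (z : C) L s :
  \sum_(0 <= i < L) (i == s)%:R * z ^+ i = (s < L)%N%:R * z ^+ s.
Proof.
elim: L => [|L IH]; first by rewrite big_geq // mul0r.
rewrite big_nat_recr //= IH.
case: (ltngtP s L) => h.
- have -> : (s < L.+1)%N = true by lia.
  by rewrite !mul0r !mul1r addr0.
- have -> : (s < L.+1)%N = false by lia.
  by rewrite !mul0r addr0.
- have -> : (s < L.+1)%N = true by lia.
  by rewrite h !mul0r !mul1r add0r.
Qed.

Lemma coef (i s p : nat) : (0 < p)%N ->
  ((s <= i)%N && (p %| i - s)%N)%:R
  - ((p <= i)%N && ((s <= i - p)%N && (p %| i - p - s)%N))%:R
  - (i == s)%:R = 0 :> C.
Proof.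
move=> hp.
case: (ltngtP i s) => h.
- have -> : (s <= i - p)%N = false by lia.
  by rewrite andbF /= !subr0.
- case: (leqP p (i - s)) => h2.
  + have -> : (p <= i)%N = true by lia.
    have -> : (s <= i - p)%N = true by lia.
    have -> : (i - p - s = (i - s) - p)%N by lia.
    by rewrite (@dvdn_subl p (i - s) p h2 (dvdnn p)) /= subrr subr0.
  + have -> : (p %| i - s)%N = false.
      apply/negP => /dvdn_leq H; have : (p <= i - s)%N by apply: H; lia.
      lia.
    rewrite andbA.
    have -> : ((p <= i)%N && (s <= i - p)%N) = false.
      by apply/negP => /andP [? ?]; lia.
    by rewrite /= !subr0.
- subst i. rewrite subnn dvdn0 /=.
  case: (leqP p s) => h2.
  + have -> : (s <= s - p)%N = false by lia.
    by rewrite andbF /= subr0 subrr.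
  + by rewrite /= subr0 subrr.
Qed.

Lemma pattern (r : R) (z : C) (e : nat -> bool) d M p s :
  0 <= r < 1 -> nr z <= r -> (0 < p)%N -> (s < M)%N -> (M <= d)%N ->
  (forall j, (j < M)%N -> e j = (s <= j)%N && (p %| j - s)%N) ->
  nr ((1 - z ^+ p) * Sz e d z - z ^+ s) <= r ^+ M / (1 - r).
Proof.
move=> hr hz hp hs hM he.
have hL : (s < d.+1 + p)%N by lia.
have hd : z ^+ s = \sum_(0 <= i < d.+1 + p) (i == s)%:R * z ^+ i.
  by rewrite sum_delta hL mul1r.
rewrite S_mul hd -sumrB.
set c := fun i : nat => (((i <= d)%N && e i)%:R
   - (((p <= i)%N && ((i - p)%N <= d)%N) && e (i - p)%N)%:R) - (i == s)%:R : C.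
have -> : \sum_(0 <= i < d.+1 + p)
   ((((i <= d)%N && e i)%:R - (((p <= i)%N && ((i - p)%N <= d)%N) && e (i - p)%N)%:R) * z ^+ i
     - (i == s)%:R * z ^+ i) = \sum_(0 <= i < d.+1 + p) c i * z ^+ i.
  by rewrite !big_nat; apply: eq_bigr => i _; rewrite /c [in RHS]mulrBl.
apply: tail => //.
- move=> i hi; rewrite /c.
  have -> : (i <= d)%N = true by lia.
  have -> : ((i - p)%N <= d)%N = true by lia.
  rewrite he // he; last by lia.
  by rewrite /= andbT; exact: coef.
- move=> i; rewrite /c.
  case: (ltnP i M) => hi.
  + have -> : (i <= d)%N = true by lia.
    have -> : ((i - p)%N <= d)%N = true by lia.
    rewrite he // he; last by lia.
    by rewrite /= andbT coef // nr0.
  + have -> : (i == s) = false by lia.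
    by rewrite subr0 nr_bool2.
Qed.

End An4.


Section An5.
Context {R : realType}.
Local Notation C := R[i].

Lemma small (r : R) (z : C) (e : nat -> bool) d M :
  0 <= r < 1 -> nr z <= r -> (forall j, (j < M)%N -> e j = false) ->
  nr (Sz e d z) <= r ^+ M / (1 - r).
Proof.
move=> hr hz he; rewrite /Sz; apply: tail => //.
- by move=> i hi; rewrite he.
- by move=> i; exact: nr_bool.
Qed.

Lemma nrX_le (r : R) (z : C) n : 0 <= r < 1 -> nr z <= r -> nr (z ^+ n) <= 1.
Proof.
move=> /andP [h0 h1] hz; rewrite nrX; apply: exprn_ile1; first exact: nr_ge0.
lra.
Qed.

Lemma nrX_le_r (r : R) (z : C) n : 0 <= r < 1 -> nr z <= r -> (0 < n)%N ->
  nr (z ^+ n) <= r.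
Proof.
move=> /andP [h0 h1] hz hn; rewrite nrX.
case: n hn => // n _; rewrite exprS.
have h2 : nr z ^+ n <= 1 by apply: exprn_ile1; [exact: nr_ge0 | lra].
have h3 := nr_ge0 z.
have h4 : 0 <= nr z ^+ n by apply: exprn_ge0.
nra.
Qed.

Lemma nr1B (r : R) (z : C) n : 0 <= r < 1 -> nr z <= r -> nr (1 - z ^+ n) <= 2.
Proof.
move=> hr hz; apply: le_trans (nrB _ _) _; rewrite nr1.
have := nrX_le r z n hr hz; lra.
Qed.

Lemma core (r eps : R) (z A B Cc D : C) p q :
  0 <= r < 1 -> nr z <= r -> 0 <= eps -> eps <= (1 - r) / 32%:R ->
  nr ((1 - z ^+ p) * A - 1) <= eps -> nr ((1 - z ^+ q) * B - 1) <= eps ->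
  ((exists s t, (0 < s + t)%N /\ nr ((1 - z ^+ p) * Cc - z ^+ s) <= eps /\
        nr ((1 - z ^+ q) * D - z ^+ t) <= eps)
   \/ nr Cc * nr D <= eps / (1 - r)) ->
  (1 - r) / 16%:R <= nr (A * B - Cc * D).
Proof.
move=> hr hz he0 he hA hB hCD.
have /andP [r0 r1] := hr.
set a := 1 - z ^+ p; set b := 1 - z ^+ q.
have ha : nr a <= 2 by exact: (nr1B r z p hr hz).
have hb : nr b <= 2 by exact: (nr1B r z q hr hz).
have hkey : a * b * (A * B - Cc * D) = (a * A) * (b * B) - (a * Cc) * (b * D) by ring.
suff hmain : (1 - r) / 2%:R <= nr ((a * A) * (b * B) - (a * Cc) * (b * D)).
  move: hmain; rewrite -hkey !nrM => hmain.
  have := nr_ge0 a; have := nr_ge0 b; have := nr_ge0 (A * B - Cc * D).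
  set u := nr (A * B - Cc * D); move=> hu hb0 ha0.
  have hab : nr a * nr b <= 4%:R by nra.
  have : nr a * nr b * u <= 4%:R * u by apply: ler_wpM2r.
  lra.
set X := a * A; set Y := b * B; set U := a * Cc; set V := b * D.
have hY : nr Y <= 1 + eps.
  have := nrD (Y - 1) 1; rewrite subrK nr1; lra.
have e1 : eps <= 1 / 32%:R by lra.
have hXY : nr (X * Y - 1) <= eps * (1 + eps) + eps.
  have -> : X * Y - 1 = (X - 1) * Y + (Y - 1) by ring.
  apply: le_trans (nrD _ _) _; rewrite (nrM (X - 1) Y).
  have p1 : nr (X - 1) * nr Y <= eps * (1 + eps).
    by apply: ler_pM => //; apply: nr_ge0.
  apply: le_trans (lerD p1 hB) _; lra.
case: hCD => [[s [t [hst [hU hV]]]] | hCD].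
- have hV' : nr V <= 1 + eps.
    have := nrD (V - z ^+ t) (z ^+ t); rewrite subrK.
    have := nrX_le r z t hr hz; lra.
  have hzs := nrX_le r z s hr hz.
  have hUV : nr (U * V - z ^+ (s + t)) <= eps * (1 + eps) + eps.
    have -> : U * V - z ^+ (s + t) = (U - z ^+ s) * V + z ^+ s * (V - z ^+ t)
      by rewrite exprD; ring.
    apply: le_trans (nrD _ _) _; rewrite (nrM (U - z ^+ s) V) (nrM (z ^+ s)).
    have p1 : nr (U - z ^+ s) * nr V <= eps * (1 + eps).
      by apply: ler_pM => //; apply: nr_ge0.
    have p2 : nr (z ^+ s) * nr (V - z ^+ t) <= 1 * eps.
      by apply: ler_pM => //; apply: nr_ge0.
    apply: le_trans (lerD p1 p2) _; lra.
  have h1 : 1 - r <= nr (1 - z ^+ (s + t)).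
    have := nrBl 1 (z ^+ (s + t)); rewrite nr1.
    have := nrX_le_r r z (s + t) hr hz hst. lra.
  have -> : X * Y - U * V = (1 - z ^+ (s + t)) + ((X * Y - 1) - (U * V - z ^+ (s + t)))
    by ring.
  have := nrBl (1 - z ^+ (s + t)) (- ((X * Y - 1) - (U * V - z ^+ (s + t)))).
  rewrite opprK nrN.
  have := nrB (X * Y - 1) (U * V - z ^+ (s + t)).
  nra.
- have hUV : nr (U * V) <= 4%:R * (eps / (1 - r)).
    rewrite /U /V !nrM.
    have -> : nr a * nr Cc * (nr b * nr D) = (nr a * nr b) * (nr Cc * nr D) by ring.
    have := nr_ge0 a; have := nr_ge0 b; have := nr_ge0 Cc; have := nr_ge0 D => h1 h2 h3 h4.
    apply: ler_pM => //; [nra | nra | nra].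
  have hq : eps / (1 - r) <= 1 / 32%:R.
    rewrite ler_pdivrMr; last lra.
    lra.
  have -> : X * Y - U * V = 1 + ((X * Y - 1) - U * V) by ring.
  have := nrBl 1 (- ((X * Y - 1) - U * V)).
  rewrite opprK nrN nr1.
  have := nrB (X * Y - 1) (U * V).
  nra.
Qed.
End An5.


Section Main.
Context {R : realType}.
Local Notation C := R[i].

Lemma corrE (r : nat) k (u v : seq 'I_r) j : size u = k.+1 -> size v = k.+1 ->
  corr k u v j = E (fun i => nth 0%N (map val u) i) (fun i => nth 0%N (map val v) i) k.+1 j.
Proof.
move=> hu hv; rewrite /corr.
rewrite -(inj_eq (inj_map val_inj)) map_take map_drop.
set U := map val u; set V := map val v.
have sU : size U = k.+1 by rewrite size_map.
have sV : size V = k.+1 by rewrite size_map.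
apply/eqP/EP.
- move=> h i hi.
  have := congr1 (fun s => nth 0%N s i) h => /=.
  rewrite nth_take; last lia.
  by rewrite nth_drop addnC.
- move=> h; apply: (eq_from_nth (x0 := 0%N)).
    rewrite size_drop size_takel; [by rewrite sV | by rewrite sU; lia].
  move=> i; rewrite size_takel ?sU; last lia.
  move=> hi.
  rewrite nth_take; last lia.
  rewrite nth_drop addnC h //; lia.
Qed.

Lemma hh_le (r : nat) (T : 'I_r -> 'I_r -> bool) u : (hh T u <= size u)%N.
Proof. by rewrite /hh; have := find_size (unique_prefix T u) (iota 0 (size u)); rewrite size_iota. Qed.

Lemma pS0 (e : nat -> bool) d (t : C) : t != 0 ->
  \sum_(0 <= i < d.+1) (e i)%:R * t ^+ (d - i) = t ^+ d * Sz e d t^-1.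
Proof.
move=> t0; rewrite /Sz mulr_sumr !big_nat; apply: eq_bigr => i /andP [_ hi].
have hi' : (i <= d)%N by lia.
have tu : t \is a GRing.unit by rewrite unitfE.
by rewrite (exprB hi' tu) exprVn; field; apply: expf_neq0.
Qed.

Lemma pS1 (e : nat -> bool) d (t : C) : t != 0 ->
  \sum_(1 <= i < d.+1) (e i)%:R * t ^+ (d - i) =
  t ^+ d * Sz (fun i => (0 < i)%N && e i) d t^-1.
Proof.
move=> t0; rewrite /Sz (big_ltn (m := 0)) //= mul0r add0r mulr_sumr !big_nat.
apply: eq_bigr => i /andP [h1 hi].
have hi' : (i <= d)%N by lia.
have tu : t \is a GRing.unit by rewrite unitfE.
by rewrite h1 /= (exprB hi' tu) exprVn; field; apply: expf_neq0.
Qed.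

Lemma bern (x : R) n : 1 <= x -> 1 + n%:R * (x - 1) <= x ^+ n.
Proof.
move=> hx; elim: n => [|n IH]; first by rewrite mul0r addr0 expr0.
rewrite exprS mulrSr.
have h0 : 0 <= n%:R :> R by apply: ler0n.
have h1 : 0 <= (x ^+ n - (1 + n%:R * (x - 1))) * x by apply: mulr_ge0; lra.
have h2 : 0 <= n%:R * ((x - 1) * (x - 1)) by apply: mulr_ge0 => //; nra.
nra.
Qed.

Lemma exists_M (rho : R) : 1 < rho -> exists M : nat, (0 < M)%N /\
  (rho^-1) ^+ M / (1 - rho^-1) <= (1 - rho^-1) / 32%:R.
Proof.
move=> hrho.
set r := rho^-1.
have r0 : 0 < r by rewrite invr_gt0; lra.
have r1 : r < 1 by rewrite invf_lt1; lra.
set K := (1 - r) ^+ 2 / 32%:R.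
have K0 : 0 < K by apply: divr_gt0 => //; apply: exprn_gt0; lra.
have c0 : 0 <= (K * (rho - 1))^-1 by rewrite invr_ge0; apply: mulr_ge0; lra.
set M := (Num.Def.archi_bound ((K * (rho - 1))^-1)).+1.
have hMb := archi_boundP c0.
exists M; split => //.
have hM : (K * (rho - 1))^-1 < M%:R.
  apply: lt_le_trans hMb _; rewrite ler_nat; lia.
have hM2 : 1 <= M%:R * (K * (rho - 1)).
  rewrite -ler_pdivrMr; last by apply: mulr_gt0; lra.
  by rewrite div1r ltW.
have hb := bern rho M (ltW hrho).
have hpos : 0 < rho ^+ M by apply: exprn_gt0; lra.
have hrM : r ^+ M <= K.
  rewrite /r exprVn -[X in X <= _]div1r ler_pdivrMr //.
  have : 0 <= K by lra.
  have : 0 <= M%:R :> R by apply: ler0n.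
  nra.
rewrite ler_pdivrMr; last lra.
have -> : (1 - r) / 32%:R * (1 - r) = K by rewrite /K; field.
exact: hrM.
Qed.
End Main.


Theorem proposition4p3 (r : nat) (T : 'I_r -> 'I_r -> bool) (R : realType)
  (rho : R) :
  irreducible T -> 1 < rho ->
  exists (D0 : R) (N : nat), 0 < D0 /\
    forall (k : nat) (w1 w2 : seq 'I_r),
      size w1 = k.+1 -> admissible T w1 ->
      size w2 = k.+1 -> admissible T w2 ->
      let d1 := hh T (behead w1) in
      forall d2 : nat,
        iter d2 (@Tmap r T R k) (@wvec r T R k (behead w2))
          \in @W r T R k (behead w1) d1 ->
        (forall j, (j < d2)%N ->
           iter j (@Tmap r T R k) (@wvec r T R k (behead w2))
             \notin @W r T R k (behead w1) d1) ->
        (N <= d1)%N -> (N <= d2)%N ->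
        forall t : Cx R, rho%:C <= `|t| ->
          D0%:C * `|t| ^+ (d1 + d2) <=
          `| @p11 r R k w1 d1 t * @p22 r R k w2 d2 t
             - @p12 r R k w1 w2 d2 t * @p21 r R k w1 w2 d1 t |.
Proof.
move=> _ hrho.
have [M [hM0 hMb]] := exists_M rho hrho.
set rr := rho^-1 in hMb.
have r0 : 0 < rr by rewrite invr_gt0; lra.
have r1 : rr < 1 by rewrite invf_lt1; lra.
have hr : 0 <= rr < 1 by rewrite (ltW r0) r1.
set eps := rr ^+ M / (1 - rr) in hMb.
have eps0 : 0 <= eps by apply: divr_ge0; [apply: exprn_ge0; lra | lra].
exists ((1 - rr) / 16%:R), (3 * M)%N; split; first by apply: divr_gt0; lra.
move=> k w1 w2 hs1 _ hs2 _ d1 d2 _ _ hN1 hN2 t ht.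
have hd1 : (d1 <= k)%N by have := hh_le _ T (behead w1); rewrite size_behead hs1.
set n := k.+1.
have hn : (3 * M <= n)%N by clear -hN1 hd1; rewrite /n; lia.
have h2M : (2 * M <= n)%N by clear -hn; lia.
have hMd1 : (M <= d1)%N by clear -hN1; lia.
have hMd2 : (M <= d2)%N by clear -hN2; lia.
set x := fun i => nth 0%N (map val w1) i.
set y := fun i => nth 0%N (map val w2) i.
have htn : rho <= nr t by rewrite -lecR -nrE.
have t0 : t != 0.
  apply/negP => /eqP t0; move: htn; rewrite t0 nr0; lra.
set z := t^-1.
have hz : nr z <= rr.
  have -> : nr z = (nr t)^-1.
    apply: complexI; rewrite -nrE /z normfV nrE.
    by rewrite fmorphV.
  rewrite /rr lef_pV2 //; rewrite posrE; lra.
rewrite /p11 /p22 /p12 /p21 !pS0 // !pS1 //.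
set A := Sz _ d1 z; set B := Sz _ d2 z; set Cc := Sz _ d2 z; set D := Sz _ d1 z.
have -> : t ^+ d1 * A * (t ^+ d2 * B) - t ^+ d2 * Cc * (t ^+ d1 * D)
   = t ^+ (d1 + d2) * (A * B - Cc * D) by rewrite exprD; ring.
rewrite !nrE -rmorphXn -rmorphM lecR nrM nrX.
rewrite mulrC; apply: ler_wpM2l; first by apply: exprn_ge0; apply: nr_ge0.
have [p [/andP [p0 _] hpx]] := self_pat x n M hM0 h2M.
have [q [/andP [q0 _] hqy]] := self_pat y n M hM0 h2M.
have cxx : forall j, corr k w1 w1 j = E x x n j := fun j => corrE _ _ _ _ j hs1 hs1.
have cyy : forall j, corr k w2 w2 j = E y y n j := fun j => corrE _ _ _ _ j hs2 hs2.
have cxy : forall j, corr k w1 w2 j = E x y n j := fun j => corrE _ _ _ _ j hs1 hs2.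
have cyx : forall j, corr k w2 w1 j = E y x n j := fun j => corrE _ _ _ _ j hs2 hs1.
have hA : nr ((1 - z ^+ p) * A - 1) <= eps.
  have := pattern rr z (corr k w1 w1) d1 M p 0 hr hz p0 hM0 hMd1.
  rewrite expr0; apply => j hj; by rewrite cxx hpx // subn0.
have hB : nr ((1 - z ^+ q) * B - 1) <= eps.
  have := pattern rr z (corr k w2 w2) d2 M q 0 hr hz q0 hM0 hMd2.
  rewrite expr0; apply => j hj; by rewrite cyy hqy // subn0.
apply: (core rr eps z A B Cc D p q hr hz eps0 hMb hA hB).
have hinv : 0 <= 1 / (1 - rr) by apply: divr_ge0; lra.
case: (boolP [exists j : 'I_M, (0 < j)%N && E x y n j]) => hC; last first.
  right.
  have h1 : nr Cc <= eps.
    apply: small => // j hj; rewrite cxy; apply/negP => /andP [j0 Ej].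
    by move/negP: hC; apply; apply/existsP; exists (Ordinal hj); rewrite /= j0.
  have h2 : nr D <= 1 / (1 - rr).
    have := small rr z (fun i => (0 < i)%N && corr k w2 w1 i) d1 0 hr hz.
    by rewrite expr0; apply.
  have := ler_pM (nr_ge0 Cc) (nr_ge0 D) h1 h2.
  by rewrite mul1r.
case: (boolP [exists j : 'I_M, (0 < j)%N && E y x n j]) => hD; last first.
  right.
  have h1 : nr D <= eps.
    apply: small => // j hj; rewrite cyx; apply/negP => /andP [j0 Ej].
    by move/negP: hD; apply; apply/existsP; exists (Ordinal hj); rewrite /= j0.
  have h2 : nr Cc <= 1 / (1 - rr).
    have := small rr z (fun i => (0 < i)%N && corr k w1 w2 i) d2 0 hr hz.
    by rewrite expr0; apply.
  have := ler_pM (nr_ge0 Cc) (nr_ge0 D) h2 h1.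
  by rewrite mul1r (mulrC _ eps).
left.
have exC : exists j, [&& (0 < j)%N, (j < M)%N & E x y n j].
  case/existsP: hC => j /andP [h1 h2]; exists j; by rewrite h1 h2 ltn_ord.
have exD : exists j, [&& (0 < j)%N, (j < M)%N & E y x n j].
  case/existsP: hD => j /andP [h1 h2]; exists j; by rewrite h1 h2 ltn_ord.
case: (ex_minnP exC) => s /and3P [s0 sM Es] smin.
case: (ex_minnP exD) => u /and3P [u0 uM Eu] umin.
have Exx : E x x n (s + u) := E_trans Es Eu.
have Eyy : E y y n (u + s) := E_trans Eu Es.
have sminC : forall j, (0 < j)%N -> (j < s)%N -> ~~ E x y n j.
  move=> j j0 js; apply/negP => Ej.
  have := smin j; rewrite j0 Ej /= => /(_ ltac:(clear -js sM; lia)); clear -js; lia.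
have uminC : forall j, (0 < j)%N -> (j < u)%N -> ~~ E y x n j.
  move=> j j0 js; apply/negP => Ej.
  have := umin j; rewrite j0 Ej /= => /(_ ltac:(clear -js uM; lia)); clear -js; lia.
have su0 : (0 < s + u)%N by clear -s0; lia.
have su2 : (s + u < 2 * M)%N by clear -sM uM; lia.
have us2 : (u + s < 2 * M)%N by clear -sM uM; lia.
have ssu : (s <= s + u)%N by clear; lia.
have uus : (u <= u + s)%N by clear; lia.
exists s, u; split; first exact: su0.
split.
- apply: (pattern rr z _ d2 M p s hr hz p0 sM hMd2) => j hj.
  rewrite cxy.
  exact: (cross_pat x y n M p (s + u) s hpx Exx su2 hn ssu s0 sM Es sminC j hj).
- apply: (pattern rr z _ d1 M q u hr hz q0 uM hMd1) => j hj.
  rewrite cyx.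
  exact: (cross_pat y x n M q (u + s) u hqy Eyy us2 hn uus u0 uM Eu uminC j hj).
Qed.
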